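(* For all coprime positive integers $a, b$, the binary word $\mathrm{gen}(a,b)$ has exactly $a+b-1$ distinct subsequences, i.e. $\mathsf{P}(\mathrm{gen}(a,b)) = a+b-1$.
   Context: Words are over the alphabet $\{\mathsf{A},\mathsf{B}\}$; $\mathsf{0}$ denotes the empty word and $\circ$ concatenation. $\mathsf{P}(\mathfrak{s})$ denotes the number of distinct words that are subsequences (not necessarily contiguous) of $\mathfrak{s}$, the empty word included. For coprime integers $a,b\ge 1$ the word $\mathrm{gen}(a,b)$ is defined recursively by: $\mathrm{gen}(1,1)=\mathsf{0}$; $\mathrm{gen}(a,b)=\mathsf{A}\circ\mathrm{gen}(a-b,b)$ if $a>b$; $\mathrm{gen}(a,b)=\mathsf{B}\circ\mathrm{gen}(a,b-a)$ if $b>a$ (this follows the Euclidean algorithm and is well defined). *)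

(* Defs.v *)
From HB Require Import structures.
From mathcomp Require Import all_boot.
Set Implicit Arguments. Unset Strict Implicit. Unset Printing Implicit Defensive.

Inductive letter := A | B.

Definition letter_eqb (x y : letter) : bool :=
  match x, y with A, A | B, B => true | _, _ => false end.
Lemma letter_eqP : Equality.axiom letter_eqb.
Proof. by case; case; constructor. Qed.
HB.instance Definition _ := hasDecEq.Build letter letter_eqP.

Definition word := seq letter.

Fixpoint all_masks (n : nat) : seq bitseq :=
  match n with
  | 0 => [:: [::]]
  | n'.+1 => [seq b :: m | b <- [:: false; true], m <- all_masks n']
  end.

(* The distinct subsequences (not necessarily contiguous) of s,
   empty word included: every subsequence of s is mask m s for some mask m
   of length size s; duplicates removed. *)
Definition subseqs (s : word) : seq word :=
  undup [seq mask m s | m <- all_masks (size s)].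

Definition P (s : word) : nat := size (subseqs s).

(* gen(a,b), following the Euclidean algorithm; fuel a+b suffices. *)
Fixpoint gen_fuel (fuel a b : nat) : word :=
  match fuel with
  | 0 => [::]
  | fuel'.+1 =>
      if (a == 1) && (b == 1) then [::]
      else if b < a then A :: gen_fuel fuel' (a - b) b
      else B :: gen_fuel fuel' a (b - a)
  end.

Definition gen (a b : nat) : word := gen_fuel (a + b) a b.

(* Main.v *)
Require Import Defs.
From mathcomp Require Import all_boot.
From mathcomp Require Import zify.

Lemma cop_subl a b : b < a -> coprime a b -> coprime (a - b) b.
Proof.
move=> lt H; rewrite /coprime gcdnC -gcdnDr subnK ?(ltnW lt) // gcdnC; exact: H.
Qed.

Lemma cop_subr a b : a < b -> coprime a b -> coprime a (b - a).
Proof.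
move=> lt H; rewrite /coprime -gcdnDl subnKC ?(ltnW lt) //.
Qed.

Lemma cop_eq a : coprime a a -> a = 1.
Proof. by rewrite /coprime gcdnn => /eqP. Qed.

Lemma gen_fuel_eq n m a b : 0 < a -> 0 < b -> coprime a b -> a + b <= n -> a + b <= m ->
  gen_fuel n a b = gen_fuel m a b.
Proof.
elim: n m a b => [|n IH] m a b Ha Hb Hc Hn Hm; first lia.
case: m Hm => [|m] Hm; first lia.
rewrite /=; case: ifP => // H1; case: ifP => H.
  by rewrite (IH m) //; [lia | exact: cop_subl | lia | lia].
case: (ltngtP a b) => H2.
- by rewrite (IH m) //; [lia | exact: cop_subr | lia | lia].
- by rewrite H2 in H.
- subst b; move/cop_eq: Hc => Ha1; by rewrite Ha1 in H1.
Qed.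

Lemma gen11 : gen 1 1 = [::].
Proof. by []. Qed.

Lemma gen_lt a b : 0 < b -> b < a -> coprime a b -> gen a b = A :: gen (a - b) b.
Proof.
move=> Hb H Hc; rewrite /gen.
have -> : a + b = (a + b).-1.+1 by lia.
rewrite /=; have -> : (a == 1) && (b == 1) = false by apply/negbTE; lia.
rewrite H; congr (_ :: _); apply: gen_fuel_eq; try lia; exact: cop_subl.
Qed.

Lemma gen_gt a b : 0 < a -> a < b -> coprime a b -> gen a b = B :: gen a (b - a).
Proof.
move=> Ha H Hc; rewrite /gen.
have -> : a + b = (a + b).-1.+1 by lia.
rewrite /=; have -> : (a == 1) && (b == 1) = false by apply/negbTE; lia.
rewrite ltnNge (ltnW H) /=; congr (_ :: _); apply: gen_fuel_eq; try lia; exact: cop_subr.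
Qed.

Lemma gen_c1 c : 0 < c -> gen c 1 = nseq c.-1 A.
Proof.
elim: c => [//|[|c] IH] _ //.
rewrite gen_lt //; last by rewrite /coprime gcdn1.
by rewrite subn1 IH.
Qed.

Lemma gen_1c c : 0 < c -> gen 1 c = nseq c.-1 B.
Proof.
elim: c => [//|[|c] IH] _ //.
rewrite gen_gt //; last by rewrite /coprime gcd1n.
by rewrite subSS subn0 IH.
Qed.

Lemma all_masksS n : all_masks n.+1 = [seq b :: m | b <- [:: false; true], m <- all_masks n].
Proof. by []. Qed.

Lemma all_masksP n m : (m \in all_masks n) = (size m == n).
Proof.
elim: n m => [|n IH] m; first by case: m.
rewrite all_masksS.
case: m => [|b m].
  by apply/allpairsP => [[p [_ _ ]]].
apply/allpairsP/idP => [[p [Hp1 Hp2 [E1 E2]]]|H].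
  by rewrite E1 E2 /= eqSS -IH.
exists (b, m); split => //; first by case: (b).
by rewrite IH; rewrite /= eqSS in H.
Qed.

Lemma subseqsP s w : (w \in subseqs s) = subseq w s.
Proof.
rewrite mem_undup; apply/mapP/subseqP => [[m Hm ->]|[m Hs ->]].
  by exists m => //; apply/eqP; rewrite -all_masksP.
by exists m => //; rewrite all_masksP Hs.
Qed.

Lemma P_char s L : uniq L -> (forall w, (w \in L) = subseq w s) -> P s = size L.
Proof.
move=> U H; rewrite /P; apply: perm_size; apply: uniq_perm => //.
  exact: undup_uniq.
by move=> w; rewrite subseqsP H.
Qed.

Definition other x := match x with A => B | B => A end.

Lemma subseq_cons_drop (y : letter) (w t : word) :
  subseq (y :: w) t = (y \in t) && subseq w (drop (index y t).+1 t).
Proof.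
elim: t => [|z t IH] //=.
rewrite in_cons [z == y]eq_sym; case: (y == z) => //=.
by rewrite drop0.
Qed.

Lemma cons_inj x : injective (cons x : word -> word).
Proof. by move=> u v [->]. Qed.

Lemma P_cons x t : P (x :: t) = (P t).+1 +
   (if other x \in t then P (drop (index (other x) t).+1 t) else 0).
Proof.
set t' := drop _ t.
pose L := [::] :: map (cons x) (subseqs t) ++
   (if other x \in t then map (cons (other x)) (subseqs t') else [::]).
have notin : forall (y y' : letter) (v : word) (S : seq word), y != y' -> (y' :: v \in map (cons y) S) = false.
  move=> y y' v S nyx; apply/mapP => [[u _ [E _]]].
  by rewrite E eqxx in nyx.
rewrite (@P_char _ L).
- rewrite /L /= size_cat size_map /P; case: ifP => //= _; by rewrite size_map.
- rewrite /L /= cat_uniq map_inj_uniq ?undup_uniq ?andbT; last exact: cons_inj.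
  apply/andP; split.
    rewrite mem_cat negb_or; apply/andP; split; first by apply/mapP => [[u _]].
    by case: ifP => // _; apply/mapP => [[u _]].
  case: ifP => _ //=; rewrite map_inj_uniq ?undup_uniq ?andbT; last exact: cons_inj.
  apply/hasP => [[v /mapP [u _ ->] /mapP [u' _ [E _]]]].
  by clear -E; case: x E.
- case => [|z w]; first by rewrite /L in_cons eqxx.
  rewrite /L in_cons /= mem_cat.
  have [->|nzx] := eqVneq z x.
    rewrite (mem_map (@cons_inj x)) subseqsP.
    case: ifP => _; last by rewrite orbF.
    rewrite notin ?orbF //; by clear; case: x.
  rewrite notin 1?eq_sym // /=.
  have Ez : z = other x by clear -nzx; case: x z nzx => [] [].
  subst z; rewrite subseq_cons_drop.
  case: ifP => //= _; by rewrite (mem_map (@cons_inj _)) subseqsP.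
Qed.

Lemma P_nil : P [::] = 1.
Proof. by []. Qed.

Definition MainStmt N := forall a b, a + b < N -> 0 < a -> 0 < b -> coprime a b ->
  P (gen a b) = a + b - 1.

Lemma sufB_lem N (IH : MainStmt N) c b : 0 < c -> 1 < b -> b < N -> coprime c b ->
  (B \in gen c b) && (P (drop (index B (gen c b)).+1 (gen c b)) == b - 1).
Proof.
move: c; elim/ltn_ind => c IHc Hc Hb HN Hcop.
case: (ltngtP b c) => H.
- rewrite gen_lt //; try lia.
  rewrite in_cons /=; apply: IHc; try lia; exact: cop_subl.
- rewrite gen_gt // in_cons eqxx /= drop0.
  rewrite IH //; try lia; last exact: cop_subr.
- subst c; move/cop_eq: Hcop; lia.
Qed.

Lemma sufA_lem N (IH : MainStmt N) a c : 1 < a -> 0 < c -> a < N -> coprime a c ->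
  (A \in gen a c) && (P (drop (index A (gen a c)).+1 (gen a c)) == a - 1).
Proof.
move: c; elim/ltn_ind => c IHc Ha Hc HN Hcop.
case: (ltngtP a c) => H.
- rewrite gen_gt //; try lia.
  rewrite in_cons /=; apply: IHc; try lia; exact: cop_subr.
- rewrite gen_lt // in_cons eqxx /= drop0.
  rewrite IH //; try lia; last exact: cop_subl.
- subst c; move/cop_eq: Hcop; lia.
Qed.

Lemma main_ind N : MainStmt N.
Proof.
elim: N => [|N IH] a b HN Ha Hb Hc; first lia.
case: (ltngtP b a) => H.
- rewrite gen_lt // P_cons /= IH //; try lia; last exact: cop_subl.
  have [Eb|Hb2] := eqVneq b 1.
    subst b; rewrite gen_c1; last lia.
    by rewrite mem_nseq andbF; lia.
  have /andP [-> /eqP ->] := @sufB_lem N IH (a - b) b ltac:(lia) ltac:(lia) ltac:(lia) (@cop_subl a b H Hc).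
  lia.
- rewrite gen_gt // P_cons /= IH //; try lia; last exact: cop_subr.
  have [Ea|Ha2] := eqVneq a 1.
    subst a; rewrite gen_1c; last lia.
    by rewrite mem_nseq andbF; lia.
  have /andP [-> /eqP ->] := @sufA_lem N IH a (b - a) ltac:(lia) ltac:(lia) ltac:(lia) (@cop_subr a b H Hc).
  lia.
- subst b; move/cop_eq: Hc => ->; by rewrite gen11 P_nil.
Qed.

Theorem theorem1 (a b : nat) :
  0 < a -> 0 < b -> coprime a b -> P (gen a b) = a + b - 1.
Proof.
move=> Ha Hb Hc; apply: (@main_ind (a + b).+1) => //.
Qed.
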